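(* Let $(X,\mathscr{R})$ be a reaction network with stoichiometric matrix $S$, and let $x,y\in X$. Then $x\rightleftharpoons y$ if and only if $m_x=m_y$ for all $m\in\ker S^\top$.
   Context: A reaction network (RN) $(X,\mathscr{R})$ consists of a finite non-empty set $X$ of species and a finite non-empty set $\mathscr{R}$ of reactions. Each reaction $r$ is given by stoichiometric coefficients $s^-_{xr},s^+_{xr}\in\mathbb{N}_0$. The stoichiometric matrix $S\in\mathbb{Z}^{X\times\mathscr{R}}$ has entries $S_{xr}=s^+_{xr}-s^-_{xr}$. The paper assumes throughout that RNs are closed: every reaction $r$ has $x,y$ with $S_{xr}<0<S_{yr}$. A vector $v\in\mathbb{Z}^{\mathscr{R}}$ specifies a net isomerization reaction $kx\to ky$ if both of the following hold: - $k:=-[Sv]_x=[Sv]_y$ is a positive integer, for some $x,y\in X$; - $[Sv]_z=0$ for all $z\in X\setminus\{x,y\}$. Distinct $x,y\in X$ are obligatory isomers if some $v\in\mathbb{Z}^{\mathscr{R}}$ specifies a net isomerization reaction $kx\to ky$. Write $x\rightleftharpoons y$ if $x=y$ or $x,y$ are obligatory isomers. *)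

(* Defs.v *)
From HB Require Import structures.
From mathcomp Require Import all_boot all_order all_algebra.
From mathcomp Require Import reals.
Set Implicit Arguments. Unset Strict Implicit. Unset Printing Implicit Defensive.
Import Order.TTheory GRing.Theory Num.Theory.
Local Open Scope ring_scope.

(* A reaction network: species X, reactions Rn (finite types), with
   stoichiometric coefficients sm x r = s^-_{xr}, sp x r = s^+_{xr}. *)

Definition stoich (X Rn : finType) (sm sp : X -> Rn -> nat) (x : X) (r : Rn) : int :=
  (sp x r)%:Z - (sm x r)%:Z.

Definition closed_RN (X Rn : finType) (sm sp : X -> Rn -> nat) : Prop :=
  forall r : Rn, exists x y : X, stoich sm sp x r < 0 /\ 0 < stoich sm sp y r.

Definition Sv (X Rn : finType) (sm sp : X -> Rn -> nat) (v : Rn -> int) (x : X) : int :=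
  \sum_(r : Rn) stoich sm sp x r * v r.

Definition specifies_net_isom (X Rn : finType) (sm sp : X -> Rn -> nat)
    (v : Rn -> int) (k : int) (x y : X) : Prop :=
  [/\ 0 < k, - Sv sm sp v x = k, Sv sm sp v y = k &
      forall z : X, z != x -> z != y -> Sv sm sp v z = 0].

Definition obligatory_isomers (X Rn : finType) (sm sp : X -> Rn -> nat) (x y : X) : Prop :=
  x != y /\ exists (v : Rn -> int) (k : int), specifies_net_isom sm sp v k x y.

Definition isom_rel (X Rn : finType) (sm sp : X -> Rn -> nat) (x y : X) : Prop :=
  x = y \/ obligatory_isomers sm sp x y.

Definition in_ker_ST (R : realType) (X Rn : finType) (sm sp : X -> Rn -> nat)
    (m : X -> R) : Prop :=
  forall r : Rn, \sum_(x : X) (stoich sm sp x r)%:~R * m x = 0.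

(* Main.v *)
Require Import Defs.
From HB Require Import structures.
From mathcomp Require Import all_boot all_order all_algebra.
From mathcomp Require Import reals.
From mathcomp Require Import ring.
Set Implicit Arguments. Unset Strict Implicit. Unset Printing Implicit Defensive.
Import Order.TTheory GRing.Theory Num.Theory.
Local Open Scope ring_scope.

Section Aux.
Variables (X Rn : finType) (sm sp : X -> Rn -> nat).

Lemma sum_Sv (F : numFieldType) (v : Rn -> int) (m : X -> F) :
  (forall r, \sum_(z : X) (stoich sm sp z r)%:~R * m z = 0) ->
  \sum_(z : X) (Sv sm sp v z)%:~R * m z = 0.
Proof.
move=> hm.
under eq_bigr => z _ do rewrite /Sv rmorph_sum big_distrl /=.
rewrite exchange_big /= big1 // => r _.
under eq_bigr => z _ do rewrite intrM mulrAC.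
by rewrite -big_distrl /= hm mul0r.
Qed.

Lemma easy_dir (F : numFieldType) (x y : X) (v : Rn -> int) (k : int) (m : X -> F) :
  x != y -> specifies_net_isom sm sp v k x y ->
  (forall r, \sum_(z : X) (stoich sm sp z r)%:~R * m z = 0) -> m x = m y.
Proof.
move=> nxy [kp hx hy h0] hm.
have := sum_Sv v hm.
rewrite (bigD1 x) //= (bigD1 y) 1?eq_sym //= big1; last first.
  by move=> z /andP [zy zx]; rewrite h0 // mul0r.
rewrite addr0 hy -[Sv _ _ _ x]opprK hx mulrNz mulNr addrC -mulrBr => /eqP.
rewrite mulf_eq0 intr_eq0 (gt_eqF kp) /= subr_eq0 => /eqP //.
Qed.


Lemma hard_dir (x y : X) : x != y ->
  (forall m : X -> rat,
    (forall r, \sum_(z : X) (stoich sm sp z r)%:~R * m z = 0) -> m x = m y) ->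
  exists v k, specifies_net_isom sm sp v k x y.
Proof.
move=> nxy Hq.
pose B : 'M[rat]_(#|Rn|, #|X|) :=
  \matrix_(i, j) (stoich sm sp (enum_val j) (enum_val i))%:~R.
pose b : 'rV[rat]_#|X| :=
  \row_j ((enum_val j == y)%:R - (enum_val j == x)%:R).
have sumX : forall (f : X -> rat),
    \sum_(i < #|X|) f (enum_val i) = \sum_(z : X) f z.
  move=> f; rewrite (reindex (@enum_rank X)) /=; last exact/onW_bij/enum_rank_bij.
  by apply: eq_bigr => z _; rewrite enum_rankK.
have sumR : forall (f : Rn -> rat),
    \sum_(i < #|Rn|) f (enum_val i) = \sum_(z : Rn) f z.
  move=> f; rewrite (reindex (@enum_rank Rn)) /=; last exact/onW_bij/enum_rank_bij.
  by apply: eq_bigr => z _; rewrite enum_rankK.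
have hb : (b <= B)%MS.
  rewrite submxE; apply/eqP/matrixP => i j; rewrite !mxE.
  pose m := fun z => cokermx B (enum_rank z) j.
  have hm : forall r, \sum_(z : X) (stoich sm sp z r)%:~R * m z = 0.
    move=> r; have /matrixP/(_ (enum_rank r) j) := mulmx_coker B.
    rewrite !mxE /= => e; apply: (etrans _ e); rewrite -sumX; apply: eq_bigr => k _.
    by rewrite /m !mxE enum_rankK enum_valK.
  have := Hq m hm.
  move=> hxy.
  transitivity (\sum_(z : X) ((z == y)%:R - (z == x)%:R) * cokermx B (enum_rank z) j).
    by rewrite -sumX; apply: eq_bigr => k _; rewrite !mxE enum_valK.
  move: hxy.
  under eq_bigr => z _ do rewrite mulrBl.
  rewrite sumrB (bigD1 y) //= big1 => [|z /negbTE ->]; last by rewrite mul0r.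
  rewrite (bigD1 x) //= big1 => [|z /negbTE ->]; last by rewrite mul0r.
  by rewrite !eqxx !mul1r !addr0 /m => ->; rewrite subrr.
case/submxP: hb => w hw.
have hbz : forall z, \sum_(r : Rn) (stoich sm sp z r)%:~R * w 0 (enum_rank r)
    = (z == y)%:R - (z == x)%:R.
  move=> z; have /matrixP/(_ 0 (enum_rank z)) := hw; rewrite !mxE enum_rankK => ->.
  rewrite -sumR; apply: eq_bigr => i _; by rewrite !mxE enum_valK enum_rankK mulrC.
pose K : int := \prod_(i < #|Rn|) denq (w 0 i).
pose v := fun r => numq (w 0 (enum_rank r)) * \prod_(i < #|Rn| | i != enum_rank r) denq (w 0 i).
have hv : forall r, (v r)%:~R = w 0 (enum_rank r) * K%:~R :> rat.
  by move=> r; rewrite /v /K [in RHS](bigD1 (enum_rank r)) //= !intrM numqE mulrA.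
have Kpos : 0 < K by apply: prodr_gt0 => i _; apply: denq_gt0.
have hS : forall z, (Sv sm sp v z)%:~R = K%:~R * ((z == y)%:R - (z == x)%:R) :> rat.
  move=> z; rewrite /Sv rmorph_sum /= -hbz big_distrr; apply: eq_bigr => r _ /=.
  by rewrite intrM hv [RHS]mulrC mulrA.
exists v, K; split => //.
- apply: (@intr_inj rat); rewrite intrN hS eqxx (negbTE nxy) /=; ring.
- apply: (@intr_inj rat); rewrite hS eqxx eq_sym (negbTE nxy) /=; ring.
- move=> z zx zy; apply: (@intr_inj rat); rewrite hS (negbTE zx) (negbTE zy) /=; ring.
Qed.

End Aux.
Unset Implicit Arguments.
Local Close Scope ring_scope.

Theorem theorem6 (R : realType) (X Rn : finType) (sm sp : X -> Rn -> nat)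
    (hX : 0 < #|X|) (hRn : 0 < #|Rn|) (hclosed : closed_RN sm sp) (x y : X) :
  isom_rel sm sp x y <->
  (forall m : X -> R, in_ker_ST sm sp m -> m x = m y).
Proof.
Local Open Scope ring_scope.
split.
  case=> [-> // | [nxy [v [k hv]]]] m hm.
  exact: easy_dir nxy hv hm.
move=> H.
have [->|nxy] := eqVneq x y; first by left.
right; split => //.
have Hq : forall m : X -> rat,
    (forall r, \sum_(z : X) (stoich sm sp z r)%:~R * m z = 0) -> m x = m y.
  move=> m hm; apply: (fmorph_inj (@ratr R)).
  apply: (H (fun z => ratr (m z))) => r /=.
  transitivity (ratr (\sum_(z : X) (stoich sm sp z r)%:~R * m z) : R); last by rewrite hm rmorph0.
  rewrite rmorph_sum.
  by apply: eq_bigr => z _; rewrite rmorphM /= ratr_int.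
exact: hard_dir nxy Hq.
Qed.
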